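(* Let $\Phi\subseteq \mathrm{FO}\cup\sim\mathrm{FO}$ (w.l.o.g. no bound variable of a formula coincides with a free variable of the same formula). Let $C$ be a countably infinite set of fresh constant symbols $c^x_\delta$, and define $\Phi_f := \{\gamma(c^{x_1}_\delta,\ldots,c^{x_n}_\delta) \mid \gamma(x_1,\ldots,x_n)\in\Phi\cap\mathrm{FO},\ \sim\delta\in\Phi\cap\sim\mathrm{FO}\}\cup\{\neg\delta(c^{x_1}_\delta,\ldots,c^{x_n}_\delta)\mid \sim\delta(x_1,\ldots,x_n)\in\Phi\cap\sim\mathrm{FO}\}$. Then $\Phi$ is satisfiable in team semantics if and only if $\Phi_f$ is satisfiable in classical first-order semantics.
   Context: In first-order team semantics, an interpretation is $(\mathcal{A},T)$ with $\mathcal{A}$ a first-order structure and $T$ a set of assignments; $(\mathcal{A},T)\models\alpha$ for $\alpha\in\mathrm{FO}$ iff $(\mathcal{A},s)\models\alpha$ for all $s\in T$. The strong negation is $(\mathcal{A},T)\models\sim\varphi$ iff $(\mathcal{A},T)\not\models\varphi$, and $\sim\mathrm{FO}=\{\sim\alpha\mid\alpha\in\mathrm{FO}\}$ is a fragment of the Boolean closure $\mathcal{B}(\mathrm{FO})$ of $\mathrm{FO}$ under $\sim$ and material implication. *)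

(* Defs.v *)
From Stdlib Require Import List.
Import ListNotations.
Set Implicit Arguments.

(* The signature consists of an arbitrary type
   [Fs] of function symbols (constants of the original language are 0-ary
   function symbols) and an arbitrary type [Rs] of relation symbols.
   Terms and formulas are additionally parameterised by a type [K] of extra
   constant symbols; the original language uses [K := Empty_set], the
   extended language with the fresh constants c^x_delta uses
   [K := nat * form Fs Rs Empty_set]. *)

Section Syntax.
Variables (Fs Rs : Type).

Inductive term (K : Type) : Type :=
| Var : nat -> term K
| Cst : K -> term K
| Fn  : Fs -> list (term K) -> term K.

Inductive form (K : Type) : Type :=
| FTrue : form K
| FFalse : form K
| FEq : term K -> term K -> form K
| FRel : Rs -> list (term K) -> form K
| FNot : form K -> form K
| FAnd : form K -> form K -> form K
| FOr : form K -> form K -> form K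
| FImp : form K -> form K -> form K
| FAll : nat -> form K -> form K
| FEx : nat -> form K -> form K.

End Syntax.

Arguments Var {Fs K}.
Arguments Cst {Fs K}.
Arguments Fn {Fs K}.
Arguments FTrue {Fs Rs K}.
Arguments FFalse {Fs Rs K}.
Arguments FEq {Fs Rs K}.
Arguments FRel {Fs Rs K}.
Arguments FNot {Fs Rs K}.
Arguments FAnd {Fs Rs K}.
Arguments FOr {Fs Rs K}.
Arguments FImp {Fs Rs K}.
Arguments FAll {Fs Rs K}.
Arguments FEx {Fs Rs K}.

Record structure (Fs Rs : Type) : Type := {
  dom : Type;
  dom_inhabited : inhabited dom;
  ifun : Fs -> list dom -> dom;
  irel : Rs -> list dom -> Prop
}.

Definition upd {D : Type} (s : nat -> D) (x : nat) (d : D) : nat -> D :=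
  fun y => if Nat.eqb y x then d else s y.

Section Semantics.
Variables (Fs Rs K : Type) (A : structure Fs Rs) (ck : K -> dom A).

Fixpoint teval (s : nat -> dom A) (t : term Fs K) : dom A :=
  match t with
  | Var x => s x
  | Cst k => ck k
  | Fn f ts => ifun A f (map (teval s) ts)
  end.

Fixpoint sat (s : nat -> dom A) (phi : form Fs Rs K) : Prop :=
  match phi with
  | FTrue => True
  | FFalse => False
  | FEq t u => teval s t = teval s u
  | FRel r ts => irel A r (map (teval s) ts)
  | FNot p => ~ sat s p
  | FAnd p q => sat s p /\ sat s q
  | FOr p q => sat s p \/ sat s q
  | FImp p q => sat s p -> sat s q
  | FAll x p => forall d : dom A, sat (upd s x d) p
  | FEx x p => exists d : dom A, sat (upd s x d) p
  end.

End Semantics.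

Definition fo (Fs Rs : Type) := form Fs Rs Empty_set.

Definition sat0 (Fs Rs : Type) (A : structure Fs Rs) (s : nat -> dom A)
  (phi : fo Fs Rs) : Prop :=
  sat A (fun k : Empty_set => match k with end) s phi.

Inductive tform (Fs Rs : Type) : Type :=
| TFO : fo Fs Rs -> tform Fs Rs
| TSNeg : fo Fs Rs -> tform Fs Rs.

Arguments TFO {Fs Rs}.
Arguments TSNeg {Fs Rs}.

Definition team (Fs Rs : Type) (A : structure Fs Rs) := (nat -> dom A) -> Prop.

Definition team_sat_fo (Fs Rs : Type) (A : structure Fs Rs) (T : team A)
  (alpha : fo Fs Rs) : Prop :=
  forall s, T s -> sat0 A s alpha.

Definition team_sat (Fs Rs : Type) (A : structure Fs Rs) (T : team A)
  (phi : tform Fs Rs) : Prop :=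
  match phi with
  | TFO alpha => team_sat_fo T alpha
  | TSNeg alpha => ~ team_sat_fo T alpha
  end.

Definition team_satisfiable (Fs Rs : Type) (Phi : tform Fs Rs -> Prop) : Prop :=
  exists (A : structure Fs Rs) (T : team A),
    forall phi, Phi phi -> team_sat T phi.

(* Fresh constants c^x_delta are indexed by pairs (x, delta). *)
Definition ext_const (Fs Rs : Type) := (nat * fo Fs Rs)%type.
Definition efo (Fs Rs : Type) := form Fs Rs (ext_const Fs Rs).

Section Ground.
Variables (Fs Rs K : Type).

Fixpoint tground (sigma : nat -> term Fs K) (t : term Fs Empty_set) : term Fs K :=
  match t with
  | Var x => sigma x
  | Cst k => match k with end
  | Fn f ts => Fn f (map (tground sigma) ts)
  end.

Fixpoint ground (sigma : nat -> term Fs K) (phi : fo Fs Rs) : form Fs Rs K :=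
  match phi with
  | FTrue => FTrue
  | FFalse => FFalse
  | FEq t u => FEq (tground sigma t) (tground sigma u)
  | FRel r ts => FRel r (map (tground sigma) ts)
  | FNot p => FNot (ground sigma p)
  | FAnd p q => FAnd (ground sigma p) (ground sigma q)
  | FOr p q => FOr (ground sigma p) (ground sigma q)
  | FImp p q => FImp (ground sigma p) (ground sigma q)
  | FAll x p => FAll x (ground (fun y => if Nat.eqb y x then Var x else sigma y) p)
  | FEx x p => FEx x (ground (fun y => if Nat.eqb y x then Var x else sigma y) p)
  end.
End Ground.

Definition inst (Fs Rs : Type) (delta gamma : fo Fs Rs) : efo Fs Rs :=
  ground (fun x => Cst (x, delta)) gamma.

Definition Phi_f (Fs Rs : Type) (Phi : tform Fs Rs -> Prop) (psi : efo Fs Rs) : Prop :=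
  (exists gamma delta, Phi (TFO gamma) /\ Phi (TSNeg delta) /\ psi = inst delta gamma)
  \/ (exists delta, Phi (TSNeg delta) /\ psi = FNot (inst delta delta)).

Definition classically_satisfiable (Fs Rs : Type) (Psi : efo Fs Rs -> Prop) : Prop :=
  exists (A : structure Fs Rs) (ck : ext_const Fs Rs -> dom A) (s : nat -> dom A),
    forall psi, Psi psi -> sat A ck s psi.

(* Main.v *)
Require Import Defs.
From Stdlib Require Import List Classical ClassicalEpsilon FunctionalExtensionality.
Import ListNotations.

Section L.
Variables (Fs Rs K : Type) (A : structure Fs Rs) (ck : K -> dom A).

Definition goodsub (sigma : nat -> term Fs K) :=
  forall y, sigma y = Var y \/ exists k, sigma y = Cst k.

Fixpoint tground_ok (sigma : nat -> term Fs K) (s : nat -> dom A) (t : term Fs Empty_set) {struct t} :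
  teval A ck s (tground sigma t) =
  teval A (fun k : Empty_set => match k with end) (fun y => teval A ck s (sigma y)) t.
Proof.
  destruct t as [x|k|f ts].
  - reflexivity.
  - destruct k.
  - simpl. f_equal. rewrite map_map.
    induction ts as [|t ts IH]; simpl; [reflexivity|].
    rewrite IH. f_equal. apply tground_ok.
Qed.

Lemma ground_ok (phi : fo Fs Rs) : forall sigma s, goodsub sigma ->
  (sat A ck s (ground sigma phi) <->
   sat0 A (fun y => teval A ck s (sigma y)) phi).
Proof.
  unfold sat0.
  induction phi; intros sigma s G; simpl; try tauto.
  - rewrite !tground_ok. tauto.
  - rewrite map_map. replace (map (fun x => teval A ck s (tground sigma x)) l)
      with (map (teval A (fun k : Empty_set => match k with end) (fun y => teval A ck s (sigma y))) l).
    tauto. apply map_ext. intro; symmetry; apply tground_ok.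
  - rewrite IHphi by auto. tauto.
  - rewrite IHphi1, IHphi2 by auto. tauto.
  - rewrite IHphi1, IHphi2 by auto. tauto.
  - rewrite IHphi1, IHphi2 by auto. tauto.
  - assert (G' : goodsub (fun y => if Nat.eqb y n then Var n else sigma y)).
    { intro y. destruct (Nat.eqb y n) eqn:E; [left; apply PeanoNat.Nat.eqb_eq in E; subst; auto | apply G]. }
    split; intros H d; specialize (H d); [rewrite IHphi in H by auto|rewrite IHphi by auto];
    (replace (fun y => teval A ck (upd s n d) (if Nat.eqb y n then Var n else sigma y))
      with (upd (fun y => teval A ck s (sigma y)) n d) in *; [assumption|]);
    apply functional_extensionality; intro y; unfold upd; simpl;
    destruct (Nat.eqb y n) eqn:E; simpl; try (rewrite PeanoNat.Nat.eqb_refl; reflexivity);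
    destruct (G y) as [H1|[k H1]]; rewrite H1; simpl; try rewrite E; reflexivity.
  - assert (G' : goodsub (fun y => if Nat.eqb y n then Var n else sigma y)).
    { intro y. destruct (Nat.eqb y n) eqn:E; [left; apply PeanoNat.Nat.eqb_eq in E; subst; auto | apply G]. }
    assert (Eq : forall d, (fun y => teval A ck (upd s n d) (if Nat.eqb y n then Var n else sigma y))
      = upd (fun y => teval A ck s (sigma y)) n d).
    { intro d. apply functional_extensionality; intro y; unfold upd; simpl;
      destruct (Nat.eqb y n) eqn:E; simpl; try (rewrite PeanoNat.Nat.eqb_refl; reflexivity);
      destruct (G y) as [H1|[k H1]]; rewrite H1; simpl; try rewrite E; reflexivity. }
    split; intros [d H]; exists d; [rewrite IHphi in H by auto|rewrite IHphi by auto];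
    rewrite Eq in *; assumption.
Qed.
End L.

Lemma inst_ok (Fs Rs : Type) (A : structure Fs Rs) (ck : ext_const Fs Rs -> dom A) s delta gamma :
  sat A ck s (inst delta gamma) <-> sat0 A (fun y => ck (y, delta)) gamma.
Proof.
  unfold inst. rewrite ground_ok. reflexivity.
  intro y. right. eauto.
Qed.

Theorem mainTheorem5 (Fs Rs : Type) (Phi : tform Fs Rs -> Prop) :
  team_satisfiable Phi <-> classically_satisfiable (Phi_f Phi).
Proof.
  split.
  - intros [A [T HT]].
    destruct (dom_inhabited A) as [d0].
    assert (W : forall delta : fo Fs Rs, exists s : nat -> dom A,
               Phi (TSNeg delta) -> T s /\ ~ sat0 A s delta).
    { intro delta. destruct (classic (Phi (TSNeg delta))) as [P|P].
      - pose proof (HT _ P) as H. simpl in H. unfold team_sat_fo in H.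
        apply not_all_ex_not in H. destruct H as [s H]. exists s. intros _.
        split; [apply NNPP; intro; apply H; intro; contradiction | intro; apply H; auto].
      - exists (fun _ => d0). intro; contradiction. }
    pose (f := fun delta => proj1_sig (constructive_indefinite_description _ (W delta))).
    assert (Hf : forall delta, Phi (TSNeg delta) -> T (f delta) /\ ~ sat0 A (f delta) delta).
    { intro delta. unfold f. destruct (constructive_indefinite_description _ (W delta)); auto. }
    exists A, (fun p => f (snd p) (fst p)), (fun _ => d0).
    intros psi [[gamma [delta [H1 [H2 ->]]]] | [delta [H2 ->]]].
    + apply inst_ok. simpl. destruct (Hf _ H2) as [Ts _].
      apply (HT _ H1). exact Ts.
    + simpl. rewrite inst_ok. simpl. apply (Hf _ H2).
  - intros [A [ck [s H]]].
    exists A, (fun s' => exists delta, Phi (TSNeg delta) /\ s' = (fun y => ck (y, delta))).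
    intros [gamma|delta] P; simpl.
    + intros s' [delta [P2 ->]].
      apply (proj1 (@inst_ok _ _ A ck s delta gamma)). apply H. left. eauto 6.
    + intro Ht. unfold team_sat_fo in Ht.
      assert (N : sat A ck s (FNot (inst delta delta))) by (apply H; right; eauto).
      simpl in N. apply N. apply inst_ok. apply Ht. eauto.
Qed.
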